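(* Let $F,G:\mathbb{R}\to\mathbb{C}$ be real-analytic functions such that $|F(x)|=|G(x)|$ and $|F'(x)|=|G'(x)|$ for every $x\in\mathbb{R}$. Then there exists $c\in\mathbb{C}$ with $|c|=1$ such that either $G(x)=cF(x)$ for all $x\in\mathbb{R}$, or $G(x)=c\overline{F(x)}$ for all $x\in\mathbb{R}$. *)

(* Defs.v *)
From Stdlib Require Import Reals.
From Coquelicot Require Import Coquelicot.

Definition real_analytic (F : R -> C) : Prop :=
  forall x0 : R, exists r : R, (0 < r)%R /\ exists a : nat -> C,
    forall x : R, (Rabs (x - x0) < r)%R ->
      @is_pseries R_AbsRing C_R_NormedModule a (x - x0)%R (F x).

Definition has_derivative_C (F : R -> C) (x : R) (l : C) : Prop :=
  @is_derive R_AbsRing C_R_NormedModule F x l.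

(* Main.v *)
Require Import Defs.
From Stdlib Require Import Reals Lra Lia Psatz Classical.
From Coquelicot Require Import Coquelicot.
Open Scope R_scope.

Lemma fst_cont (l : C) : filterlim (fun z : C_R_NormedModule => fst z) (locally l) (locally (fst l)).
Proof. intros P [eps H]. exists eps. intros y Hy. apply H. destruct Hy as [H1 H2]. exact H1. Qed.
Lemma snd_cont (l : C) : filterlim (fun z : C_R_NormedModule => snd z) (locally l) (locally (snd l)).
Proof. intros P [eps H]. exists eps. intros y Hy. apply H. destruct Hy as [H1 H2]. exact H2. Qed.

Lemma pser_comp (a : nat -> C) (x : R) (l : C) :
  @is_pseries R_AbsRing C_R_NormedModule a x l ->
  is_pseries (fun n => fst (a n)) x (fst l) /\ is_pseries (fun n => snd (a n)) x (snd l).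
Proof.
  intros H. unfold is_pseries, is_series in *. split.
  - eapply filterlim_ext; [|eapply filterlim_comp; [exact H|apply fst_cont]].
    intros n. induction n. rewrite !sum_O. reflexivity.
    rewrite !sum_Sn. first [rewrite <- IHn | rewrite IHn]. reflexivity.
  - eapply filterlim_ext; [|eapply filterlim_comp; [exact H|apply snd_cont]].
    intros n. induction n. rewrite !sum_O. reflexivity.
    rewrite !sum_Sn. first [rewrite <- IHn | rewrite IHn]. reflexivity.
Qed.

Lemma der_comp (F : R -> C) (x : R) (l : C) :
  @is_derive R_AbsRing C_R_NormedModule F x l ->
  is_derive (fun y => fst (F y)) x (fst l) /\ is_derive (fun y => snd (F y)) x (snd l).
Proof.
  intros H. unfold is_derive in *. split.
  - eapply filterdiff_ext_lin.
    eapply (filterdiff_comp' F (fun z : C_R_NormedModule => fst z)). exact H.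
    apply filterdiff_linear. apply is_linear_fst.
    intros y. reflexivity.
  - eapply filterdiff_ext_lin.
    eapply (filterdiff_comp' F (fun z : C_R_NormedModule => snd z)). exact H.
    apply filterdiff_linear. apply is_linear_snd.
    intros y. reflexivity.
Qed.

Definition ra (f : R -> R) : Prop := forall x0, exists r, 0 < r /\ exists a : nat -> R,
  forall x, Rabs (x - x0) < r -> is_pseries a (x - x0) (f x).

Lemma Rabs_sg (s t : R) : (s = 1 \/ s = -1) -> Rabs (s * t) = Rabs t.
Proof. intros [->| ->]; rewrite Rabs_mult. rewrite Rabs_R1; ring. rewrite Rabs_left by lra. ring. Qed.

Lemma lim0_bounded (u : nat -> R) : is_lim_seq u 0 -> exists M, forall n, Rabs (u n) <= M.
Proof.
  intros H. apply is_lim_seq_spec in H. destruct (H (mkposreal 1 Rlt_0_1)) as [N HN].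
  assert (Hfin : forall K, exists M, forall n, (n < K)%nat -> Rabs (u n) <= M).
  { induction K. exists 0. intros; lia.
    destruct IHK as [M HM]. exists (Rmax M (Rabs (u K))). intros n Hn.
    destruct (Nat.eq_dec n K). subst. apply Rmax_r.
    eapply Rle_trans. apply HM. lia. apply Rmax_l. }
  destruct (Hfin N) as [M HM]. exists (Rmax M 1). intros n.
  destruct (Nat.lt_ge_cases n N). eapply Rle_trans. apply HM; auto. apply Rmax_l.
  specialize (HN n H0). simpl in HN. rewrite Rminus_0_r in HN. eapply Rle_trans. left; exact HN. apply Rmax_r.
Qed.

Lemma radius_ge (a : nat -> R) (r : R) : 0 < r ->
  (forall t, Rabs t < r -> ex_pseries a t) -> Rbar_le r (CV_radius a).
Proof.
  intros Hr H.
  assert (Ht : forall t, 0 <= t < r -> Rbar_le t (CV_radius a)).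
  { intros t Ht. destruct (CV_radius_bounded a) as [Hub _]. apply Hub.
    destruct (H t) as [l Hl]. rewrite Rabs_pos_eq; lra.
    apply is_pseries_R in Hl. apply lim0_bounded. apply ex_series_lim_0. exists l. exact Hl. }
  destruct (CV_radius a) as [c| |] eqn:Hc; simpl.
  - destruct (Rle_lt_dec r c); auto.
    assert (0 <= c). { specialize (Ht 0). simpl in Ht. apply Ht. lra. }
    specialize (Ht ((c + r)/2)). simpl in Ht. assert ((c+r)/2 <= c) by (apply Ht; lra). lra.
  - auto.
  - specialize (Ht 0). simpl in Ht. apply Ht. lra.
Qed.

Lemma coef0 (a : nat -> R) (s d : R) : (s = 1 \/ s = -1) -> 0 < d -> Rbar_le d (CV_radius a) ->
  (forall t, 0 < t < d -> PSeries a (s * t) = 0) -> a 0%nat = 0.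
Proof.
  intros Hs Hd Hcv H.
  assert (Hc : continuity_pt (PSeries a) 0).
  { apply PSeries_continuity. rewrite Rabs_R0. eapply Rbar_lt_le_trans; [|exact Hcv]. simpl. exact Hd. }
  destruct (Req_dec (a 0%nat) 0) as [|Hne]; auto. exfalso.
  unfold continuity_pt, continue_in, limit1_in, limit_in in Hc. simpl in Hc.
  destruct (Hc (Rabs (a 0%nat))) as [alp [Halp Hx]]. apply Rabs_pos_lt; auto.
  set (t := Rmin d alp / 2).
  assert (Ht1 : 0 < t) by (unfold t; apply Rmin_case; lra).
  assert (Ht2 : t < d) by (unfold t; generalize (Rmin_l d alp); lra).
  assert (Ht3 : t < alp) by (unfold t; generalize (Rmin_r d alp); lra).
  specialize (Hx (s * t)). unfold R_dist in Hx. rewrite H in Hx by lra. rewrite PSeries_0 in Hx.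
  assert (Rabs (s * t - 0) < alp).
  { rewrite Rminus_0_r, Rabs_sg by auto. rewrite Rabs_pos_eq; lra. }
  assert (Hst : 0 <> s * t) by (destruct Hs as [-> | ->]; lra). specialize (Hx (conj (conj I Hst) H0)). rewrite Rminus_0_l, Rabs_Ropp in Hx. lra.
Qed.

Lemma coef_all (n : nat) : forall (a : nat -> R) (s d : R), (s = 1 \/ s = -1) -> 0 < d -> Rbar_le d (CV_radius a) ->
  (forall t, 0 < t < d -> PSeries a (s * t) = 0) -> a n = 0.
Proof.
  induction n; intros a s d Hs Hd Hcv H.
  - eapply coef0; eauto.
  - change (a (S n)) with (PS_decr_1 a n). apply (IHn _ s d); auto.
    rewrite CV_radius_decr_1; auto.
    intros t Ht. assert (H0 : a 0%nat = 0) by (eapply coef0; eauto).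
    assert (Hst : s * t <> 0) by (destruct Hs; subst; lra).
    assert (Hin : ex_pseries a (s * t)).
    { apply CV_radius_inside. eapply Rbar_lt_le_trans; [|exact Hcv]. simpl.
      rewrite Rabs_sg by auto. rewrite Rabs_pos_eq; lra. }
    pose proof (PSeries_decr_1 a (s * t) Hin) as E. rewrite H, H0 in E by lra.
    apply (Rmult_eq_reg_l (s * t)); auto. lra.
Qed.

Lemma PSeries_zero (a : nat -> R) x : (forall n, a n = 0) -> PSeries a x = 0.
Proof.
  intros H. unfold PSeries. rewrite (Series_ext _ (fun k => 0 * (a k * x ^ k))).
  rewrite Series_scal_l. ring. intros k. rewrite H. ring.
Qed.

Lemma loc_zero (h : R -> R) : ra h -> forall z d s, 0 < d -> (s = 1 \/ s = -1) ->
  (forall t, 0 < t < d -> h (z + s * t) = 0) -> exists e, 0 < e /\ forall y, Rabs (y - z) < e -> h y = 0.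
Proof.
  intros Hra z d s Hd Hs H. destruct (Hra z) as [r [Hr [a Ha]]].
  assert (Hcv : Rbar_le r (CV_radius a)).
  { apply radius_ge; auto. intros t Ht. exists (h (z + t)).
    pose proof (Ha (z + t)) as Hz. replace (z + t - z) with t in Hz by ring. apply Hz; auto. }
  assert (Hz : forall n, a n = 0).
  { intros n. apply (coef_all n a s (Rmin d r)); auto. apply Rmin_case; lra.
    eapply Rbar_le_trans; [|exact Hcv]. simpl. apply Rmin_r.
    intros t Ht. rewrite <- (H t). apply is_pseries_unique. pose proof (Ha (z + s * t)) as Hz.
    replace (z + s * t - z) with (s * t) in Hz by ring. apply Hz.
    rewrite Rabs_sg by auto. generalize (Rmin_r d r) (Rmin_l d r). rewrite Rabs_pos_eq; lra.
    generalize (Rmin_l d r); lra. }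
  exists r. split; auto. intros y Hy. rewrite <- (is_pseries_unique _ _ _ (Ha y Hy)). apply PSeries_zero; auto.
Qed.

Lemma side_zero (h : R -> R) : ra h -> forall m e0 sg, 0 < e0 -> (sg = 1 \/ sg = -1) ->
  (forall y, Rabs (y - m) < e0 -> h y = 0) -> forall u, 0 <= u -> h (m + sg * u) = 0.
Proof.
  intros Hra m e0 sg He0 Hsg Hm.
  assert (Hsm : forall u, 0 <= u < e0 -> h (m + sg * u) = 0).
  { intros u Hu. apply Hm. replace (m + sg * u - m) with (sg * u) by ring. rewrite Rabs_sg by auto.
    rewrite Rabs_pos_eq; lra. }
  intros x Hx. destruct (Req_dec (h (m + sg * x)) 0) as [|Hne]; auto. exfalso.
  set (E := fun t => 0 <= t /\ forall u, 0 <= u <= t -> h (m + sg * u) = 0).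
  assert (Hb : bound E).
  { exists x. intros t [Ht1 Ht2]. destruct (Rle_lt_dec t x); auto. exfalso. apply Hne. apply Ht2. lra. }
  assert (He : exists t, E t) by (exists 0; split; [lra| intros u Hu; apply Hsm; lra]).
  destruct (completeness E Hb He) as [s [Hub Hlub]].
  assert (Hs0 : e0 / 2 <= s). { apply Hub. split. lra. intros u Hu. apply Hsm. lra. }
  assert (Hbelow : forall u, 0 <= u < s -> h (m + sg * u) = 0).
  { intros u Hu. destruct (classic (exists t, E t /\ u <= t)) as [[t [[_ Ht] Hut]]|Hn].
    apply Ht; lra. exfalso. assert (s <= u). apply Hlub. intros t Et. destruct (Rle_lt_dec t u); auto.
    exfalso. apply Hn. exists t. split; auto; lra. lra. }
  destruct (loc_zero h Hra (m + sg * s) s (- sg)) as [e [He1 He2]]. lra. destruct Hsg; subst; lra.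
  { intros t Ht. replace (m + sg * s + - sg * t) with (m + sg * (s - t)) by ring. apply Hbelow. lra. }
  assert (E (s + e / 2)).
  { split. lra. intros u Hu. destruct (Rlt_le_dec u s). apply Hbelow; lra.
    apply He2. replace (m + sg * u - (m + sg * s)) with (sg * (u - s)) by ring. rewrite Rabs_sg by auto.
    rewrite Rabs_pos_eq; lra. }
  specialize (Hub _ H). lra.
Qed.

Lemma identity (h : R -> R) : ra h -> forall a b, a < b -> (forall x, a < x < b -> h x = 0) -> forall x, h x = 0.
Proof.
  intros Hra a b Hab H x. set (m := (a + b) / 2).
  assert (Hm : forall y, Rabs (y - m) < (b - a) / 2 -> h y = 0).
  { intros y Hy. apply H. unfold m in Hy. apply Rabs_def2 in Hy. lra. }
  destruct (Rle_lt_dec m x).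
  - replace x with (m + 1 * (x - m)) by ring. eapply side_zero; eauto; lra.
  - replace x with (m + (-1) * (m - x)) by ring. eapply side_zero; eauto; lra.
Qed.
Lemma ra_ext f g : (forall x, f x = g x) -> ra f -> ra g.
Proof. intros E H x0. destruct (H x0) as [r [Hr [a Ha]]]. exists r; split; auto. exists a.
  intros x Hx. rewrite <- E. auto. Qed.

Lemma ra_plus f g : ra f -> ra g -> ra (fun x => f x + g x).
Proof.
  intros Hf Hg x0. destruct (Hf x0) as [r1 [Hr1 [a1 Ha1]]]. destruct (Hg x0) as [r2 [Hr2 [a2 Ha2]]].
  exists (Rmin r1 r2). split. apply Rmin_case; lra. exists (PS_plus a1 a2).
  intros x Hx. apply (is_pseries_plus a1 a2 (x - x0) (f x) (g x)).
  apply Ha1. generalize (Rmin_l r1 r2); lra. apply Ha2. generalize (Rmin_r r1 r2); lra.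
Qed.

Lemma ra_scal c f : ra f -> ra (fun x => c * f x).
Proof.
  intros Hf x0. destruct (Hf x0) as [r1 [Hr1 [a1 Ha1]]].
  exists r1. split; auto. exists (PS_scal c a1).
  intros x Hx. apply (is_pseries_scal c a1 (x - x0) (f x)). apply Rmult_comm. auto.
Qed.

Lemma ra_radius f x0 r a : 0 < r -> (forall x, Rabs (x - x0) < r -> is_pseries a (x - x0) (f x)) ->
  Rbar_le r (CV_radius a).
Proof.
  intros Hr Ha. apply radius_ge; auto. intros t Ht. exists (f (x0 + t)).
  pose proof (Ha (x0 + t)) as Hz. replace (x0 + t - x0) with t in Hz by ring. apply Hz; auto.
Qed.

Lemma deriv_cont f f' : ra f -> (forall x, is_derive f x (f' x)) -> forall x0, continuity_pt f' x0.
Proof.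
  intros Hf Hd x0. destruct (Hf x0) as [r [Hr [a Ha]]].
  pose proof (ra_radius f x0 r a Hr Ha) as Hcv.
  apply continuity_pt_ext_loc with (f := fun y => PSeries (PS_derive a) (y - x0)).
  - exists (mkposreal r Hr). intros y Hy. change (Rabs (y - x0) < r) in Hy.
    assert (Hloc : locally y (fun t => PSeries a (t - x0) = f t)).
    { exists (mkposreal (r - Rabs (y - x0)) ltac:(simpl; lra)). intros t Ht. change (Rabs (t - y) < r - Rabs (y - x0)) in Ht.
      apply is_pseries_unique. apply Ha.
      replace (t - x0) with ((t - y) + (y - x0)) by ring. eapply Rle_lt_trans. apply Rabs_triang. lra. }
    assert (Hder : is_derive (fun t => PSeries a (t - x0)) y (PSeries (PS_derive a) (y - x0))).
    { pose proof (is_derive_comp (PSeries a) (fun t => t - x0) y (PSeries (PS_derive a) (y - x0)) 1) as Hc.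
      replace (PSeries (PS_derive a) (y - x0)) with (scal (1:R) (PSeries (PS_derive a) (y - x0))).
      2: { change (scal (1:R) (PSeries (PS_derive a) (y - x0))) with (1 * PSeries (PS_derive a) (y - x0)). exact (Rmult_1_l _). }
      apply Hc.
      apply is_derive_PSeries. eapply Rbar_lt_le_trans; [|exact Hcv]. simpl. exact Hy.
      auto_derive; auto; ring. }
    apply is_derive_unique in Hder. rewrite <- Hder. apply is_derive_unique.
    eapply is_derive_ext_loc. 2: apply Hd. eapply filter_imp. 2: exact Hloc. intros t E; auto.
  - apply (continuity_pt_comp (fun y => y - x0) (PSeries (PS_derive a)) x0).
    + reg.
    + apply PSeries_continuity. rewrite CV_radius_derive. replace (x0 - x0) with 0 by ring. rewrite Rabs_R0.
      eapply Rbar_lt_le_trans; [|exact Hcv]. simpl. exact Hr.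
Qed.

Lemma alg1 h1 h2 g1 g2 r1 r2 q1 q2 : 0 < h1^2 + h2^2 -> h1^2 + h2^2 = g1^2 + g2^2 ->
  r1 * h1 + r2 * h2 = q1 * g1 + q2 * g2 -> r2 * h1 - r1 * h2 = q2 * g1 - q1 * g2 ->
  q1 * h1 - q2 * h2 = g1 * r1 - g2 * r2 /\ q1 * h2 + q2 * h1 = g1 * r2 + g2 * r1.
Proof.
  intros HN HNG HR HI.
  set (X1 := q1 * h1 - q2 * h2 - (g1 * r1 - g2 * r2)).
  set (X2 := q1 * h2 + q2 * h1 - (g1 * r2 + g2 * r1)).
  assert (Y1 : h1 * X1 + h2 * X2 = 0).
  { unfold X1, X2. transitivity (q1 * (h1^2 + h2^2 - (g1^2 + g2^2)) - g1 * (r1 * h1 + r2 * h2 - (q1 * g1 + q2 * g2))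
       + g2 * (r2 * h1 - r1 * h2 - (q2 * g1 - q1 * g2))). ring. rewrite HNG, HR, HI. ring. }
  assert (Y2 : h1 * X2 - h2 * X1 = 0).
  { unfold X1, X2. transitivity (q2 * (h1^2 + h2^2 - (g1^2 + g2^2)) - g2 * (r1 * h1 + r2 * h2 - (q1 * g1 + q2 * g2))
       - g1 * (r2 * h1 - r1 * h2 - (q2 * g1 - q1 * g2))). ring. rewrite HNG, HR, HI. ring. }
  assert (E1 : X1 * (h1^2 + h2^2) = 0) by (transitivity (h1 * (h1 * X1 + h2 * X2) - h2 * (h1 * X2 - h2 * X1)); [ring| rewrite Y1, Y2; ring]).
  assert (E2 : X2 * (h1^2 + h2^2) = 0) by (transitivity (h2 * (h1 * X1 + h2 * X2) + h1 * (h1 * X2 - h2 * X1)); [ring| rewrite Y1, Y2; ring]).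
  apply Rmult_integral in E1. apply Rmult_integral in E2.
  destruct E1 as [E1|E1]; [|lra]. destruct E2 as [E2|E2]; [|lra]. unfold X1, X2 in *. split; lra.
Qed.
Lemma alg2 h1 h2 g1 g2 r1 r2 q1 q2 : 0 < h1^2 + h2^2 ->
  q1 * h1 - q2 * h2 = g1 * r1 - g2 * r2 -> q1 * h2 + q2 * h1 = g1 * r2 + g2 * r1 ->
  (q1 * h1 + g1 * r1 + q2 * h2 + g2 * r2) * (h1^2 + h2^2) - (g1 * h1 + g2 * h2) * (2 * (r1 * h1 + r2 * h2)) = 0 /\
  (q2 * h1 + g2 * r1 - q1 * h2 - g1 * r2) * (h1^2 + h2^2) - (g2 * h1 - g1 * h2) * (2 * (r1 * h1 + r2 * h2)) = 0.
Proof.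
  intros HN X1 X2.
  assert (Q1 : q1 * (h1^2 + h2^2) = h1 * (g1 * r1 - g2 * r2) + h2 * (g1 * r2 + g2 * r1)).
  { rewrite <- X1, <- X2. ring. }
  assert (Q2 : q2 * (h1^2 + h2^2) = h1 * (g1 * r2 + g2 * r1) - h2 * (g1 * r1 - g2 * r2)).
  { rewrite <- X1, <- X2. ring. }
  split; apply (Rmult_eq_reg_r (h1^2 + h2^2)); try lra.
  - transitivity (h1 * (h1^2+h2^2) * (q1 * (h1^2 + h2^2)) + h2 * (h1^2+h2^2) * (q2 * (h1^2 + h2^2))
      + (g1 * r1 + g2 * r2) * (h1^2+h2^2)^2 - (g1 * h1 + g2 * h2) * (2 * (r1 * h1 + r2 * h2)) * (h1^2+h2^2)).
    ring. rewrite Q1, Q2. ring.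
  - transitivity (h1 * (h1^2+h2^2) * (q2 * (h1^2 + h2^2)) - h2 * (h1^2+h2^2) * (q1 * (h1^2 + h2^2))
      + (g2 * r1 - g1 * r2) * (h1^2+h2^2)^2 - (g2 * h1 - g1 * h2) * (2 * (r1 * h1 + r2 * h2)) * (h1^2+h2^2)).
    ring. rewrite Q1, Q2. ring.
Qed.

Lemma core (h1 h2 g1 g2 r1 r2 q1 q2 : R -> R) a b : a < b ->
  (forall x, is_derive h1 x (r1 x)) -> (forall x, is_derive h2 x (r2 x)) ->
  (forall x, is_derive g1 x (q1 x)) -> (forall x, is_derive g2 x (q2 x)) ->
  (forall x, a < x < b -> 0 < h1 x ^ 2 + h2 x ^ 2) ->
  (forall x, a < x < b -> h1 x ^ 2 + h2 x ^ 2 = g1 x ^ 2 + g2 x ^ 2) ->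
  (forall x, a < x < b -> r1 x * h1 x + r2 x * h2 x = q1 x * g1 x + q2 x * g2 x) ->
  (forall x, a < x < b -> r2 x * h1 x - r1 x * h2 x = q2 x * g1 x - q1 x * g2 x) ->
  exists c1 c2, c1 ^ 2 + c2 ^ 2 = 1 /\ forall x, a < x < b ->
    g1 x = c1 * h1 x - c2 * h2 x /\ g2 x = c1 * h2 x + c2 * h1 x.
Proof.
  intros Hab Dh1 Dh2 Dg1 Dg2 HN HNG HR HI.
  assert (HX : forall x, a < x < b -> q1 x * h1 x - q2 x * h2 x = g1 x * r1 x - g2 x * r2 x /\
     q1 x * h2 x + q2 x * h1 x = g1 x * r2 x + g2 x * r1 x).
  { intros x Hx. apply alg1; auto. }
  set (u1 := fun x => (g1 x * h1 x + g2 x * h2 x) / (h1 x ^ 2 + h2 x ^ 2)).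
  set (u2 := fun x => (g2 x * h1 x - g1 x * h2 x) / (h1 x ^ 2 + h2 x ^ 2)).
  assert (Du : forall x, a < x < b -> is_derive u1 x 0 /\ is_derive u2 x 0).
  { intros x Hx. specialize (HN x Hx). destruct (HX x Hx) as [X1 X2].
    assert (E1 : Derive (fun t => h1 t) x = r1 x) by (apply is_derive_unique; apply Dh1).
    assert (E2 : Derive (fun t => h2 t) x = r2 x) by (apply is_derive_unique; apply Dh2).
    assert (E3 : Derive (fun t => g1 t) x = q1 x) by (apply is_derive_unique; apply Dg1).
    assert (E4 : Derive (fun t => g2 t) x = q2 x) by (apply is_derive_unique; apply Dg2).
    assert (x1 : ex_derive h1 x) by (eexists; apply Dh1). assert (x2 : ex_derive h2 x) by (eexists; apply Dh2).
    assert (x3 : ex_derive g1 x) by (eexists; apply Dg1). assert (x4 : ex_derive g2 x) by (eexists; apply Dg2).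
    destruct (alg2 (h1 x) (h2 x) (g1 x) (g2 x) (r1 x) (r2 x) (q1 x) (q2 x) HN X1 X2) as [A1 A2].
    split; unfold u1, u2; auto_derive; repeat split; auto; try lra;
    rewrite ?E1, ?E2, ?E3, ?E4.
    - transitivity (((q1 x * h1 x + g1 x * r1 x + q2 x * h2 x + g2 x * r2 x) * (h1 x^2 + h2 x^2) - (g1 x * h1 x + g2 x * h2 x) * (2 * (r1 x * h1 x + r2 x * h2 x))) / (h1 x ^2 + h2 x^2)^2).
      field. lra. rewrite A1. unfold Rdiv. ring.
    - transitivity (((q2 x * h1 x + g2 x * r1 x - q1 x * h2 x - g1 x * r2 x) * (h1 x^2 + h2 x^2) - (g2 x * h1 x - g1 x * h2 x) * (2 * (r1 x * h1 x + r2 x * h2 x))) / (h1 x ^2 + h2 x^2)^2).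
      field. lra. rewrite A2. unfold Rdiv. ring. }
  assert (Const : forall (u : R -> R), (forall x, a < x < b -> is_derive u x 0) ->
     forall x y, a < x < b -> a < y < b -> u x = u y).
  { intros u Hu x y Hx Hy. destruct (Rtotal_order x y) as [Hl|[He|Hl]].
    - apply eq_is_derive; auto. intros t Ht. apply Hu. lra.
    - subst; auto.
    - symmetry. apply eq_is_derive; auto. intros t Ht. apply Hu. lra. }
  set (m := (a + b) / 2). assert (Hm : a < m < b) by (unfold m; lra).
  exists (u1 m), (u2 m).
  assert (Hu1 := Const u1 (fun x Hx => proj1 (Du x Hx))).
  assert (Hu2 := Const u2 (fun x Hx => proj2 (Du x Hx))).
  split.
  - specialize (HN m Hm). specialize (HNG m Hm). unfold u1, u2.
    transitivity (((g1 m)^2 + (g2 m)^2) * (h1 m ^2 + h2 m^2) / (h1 m ^ 2 + h2 m ^ 2)^2).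
    field. lra. rewrite <- HNG. field. lra.
  - intros x Hx. rewrite (Hu1 m x Hm Hx), (Hu2 m x Hm Hx). specialize (HN x Hx). unfold u1, u2.
    split; field; lra.
Qed.

Lemma ra_of_C (F : R -> C) : real_analytic F -> ra (fun x => fst (F x)) /\ ra (fun x => snd (F x)).
Proof.
  intros H. split; intros x0; destruct (H x0) as [r [Hr [a Ha]]]; exists r; split; auto.
  - exists (fun n => fst (a n)). intros x Hx. apply (pser_comp a (x - x0) (F x)). apply Ha; auto.
  - exists (fun n => snd (a n)). intros x Hx. apply (pser_comp a (x - x0) (F x)). apply Ha; auto.
Qed.

Lemma der_cont f x l : is_derive f x l -> continuity_pt f x.
Proof. intros H. apply continuity_pt_filterlim. apply (ex_derive_continuous f x). exists l; auto. Qed.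

Lemma cont_plus f g x : continuity_pt f x -> continuity_pt g x -> continuity_pt (fun t => f t + g t) x.
Proof. intros; apply (continuity_pt_plus f g x); auto. Qed.
Lemma cont_minus f g x : continuity_pt f x -> continuity_pt g x -> continuity_pt (fun t => f t - g t) x.
Proof. intros; apply (continuity_pt_minus f g x); auto. Qed.
Lemma cont_mult f g x : continuity_pt f x -> continuity_pt g x -> continuity_pt (fun t => f t * g t) x.
Proof. intros; apply (continuity_pt_mult f g x); auto. Qed.

Lemma nonzero_near k y : continuity_pt k y -> k y <> 0 -> exists e, 0 < e /\ forall z, Rabs (z - y) < e -> k z <> 0.
Proof.
  intros Hc0 Hne. pose proof (proj1 (continuity_pt_locally k y) Hc0) as Hc.
  destruct (Hc (mkposreal (Rabs (k y)) (Rabs_pos_lt _ Hne))) as [e He].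
  exists e. split. apply cond_pos. intros z Hz. assert (Hb : ball y e z) by (change (Rabs (z - y) < e); auto).
  specialize (He z Hb). simpl in He. intros E. rewrite E in He. rewrite Rminus_0_l, Rabs_Ropp in He. lra.
Qed.

Lemma der_sq h1 h2 r1 r2 x : is_derive h1 x r1 -> is_derive h2 x r2 ->
  is_derive (fun t => h1 t ^ 2 + h2 t ^ 2) x (2 * (r1 * h1 x + r2 * h2 x)).
Proof.
  intros D1 D2.
  assert (E1 : Derive (fun t => h1 t) x = r1) by (apply is_derive_unique; apply D1).
  assert (E2 : Derive (fun t => h2 t) x = r2) by (apply is_derive_unique; apply D2).
  assert (x1 : ex_derive h1 x) by (eexists; apply D1). assert (x2 : ex_derive h2 x) by (eexists; apply D2).
  auto_derive; auto. rewrite E1, E2. ring.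
Qed.

Lemma Cmod_sq (z w : C) : Cmod z = Cmod w -> fst z ^ 2 + snd z ^ 2 = fst w ^ 2 + snd w ^ 2.
Proof. unfold Cmod. intros H. apply sqrt_inj; auto; nra. Qed.

Lemma C_eq (z w : C) : fst z = fst w -> snd z = snd w -> z = w.
Proof. destruct z, w; simpl; intros; subst; auto. Qed.

Lemma sign_interval (phi psi : R -> R) x0 d : 0 < d -> (forall x, continuity_pt phi x) ->
  (forall x, continuity_pt psi x) -> (forall x, phi x ^ 2 = psi x ^ 2) ->
  exists a b s, x0 - d <= a /\ a < b /\ b <= x0 + d /\ (s = 1 \/ s = -1) /\
    forall x, a < x < b -> phi x = s * psi x.
Proof.
  intros Hd Cp Cq Hsq.
  destruct (classic (exists y, x0 - d < y < x0 + d /\ phi y <> 0)) as [[y [Hy Hne]]|Hn].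
  - assert (Hprod : forall x, (phi x - psi x) * (phi x + psi x) = 0).
    { intros x. specialize (Hsq x). nra. }
    destruct (Req_dec (phi y - psi y) 0) as [Hz|Hz].
    + assert (Hp : phi y + psi y <> 0) by lra.
      destruct (nonzero_near (fun t => phi t + psi t) y (cont_plus _ _ _ (Cp y) (Cq y)) Hp) as [e [He Hk]].
      exists (Rmax (x0 - d) (y - e)), (Rmin (x0 + d) (y + e)), 1.
      generalize (Rmax_l (x0 - d) (y - e)) (Rmax_r (x0 - d) (y - e)) (Rmin_l (x0 + d) (y + e)) (Rmin_r (x0 + d) (y + e)).
      intros M1 M2 M3 M4.
      split; [lra|]. split; [apply Rmax_case; apply Rmin_case; lra|]. split; [lra|]. split; [left; reflexivity|].
      * intros x Hx. assert (Hxx : Rabs (x - y) < e).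
        { apply Rabs_def1; lra. }
        specialize (Hk x Hxx). specialize (Hprod x). apply Rmult_integral in Hprod. destruct Hprod; [lra|]. tauto.
    + destruct (nonzero_near (fun t => phi t - psi t) y (cont_minus _ _ _ (Cp y) (Cq y)) Hz) as [e [He Hk]].
      exists (Rmax (x0 - d) (y - e)), (Rmin (x0 + d) (y + e)), (-1).
      generalize (Rmax_l (x0 - d) (y - e)) (Rmax_r (x0 - d) (y - e)) (Rmin_l (x0 + d) (y + e)) (Rmin_r (x0 + d) (y + e)).
      intros M1 M2 M3 M4.
      split; [lra|]. split; [apply Rmax_case; apply Rmin_case; lra|]. split; [lra|]. split; [right; reflexivity|].
      * intros x Hx. assert (Hxx : Rabs (x - y) < e).
        { apply Rabs_def1; lra. }
        specialize (Hk x Hxx). specialize (Hprod x). apply Rmult_integral in Hprod. destruct Hprod; [tauto|]. lra.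
  - exists (x0 - d), (x0 + d), 1. repeat split; try lra. intros x Hx.
    assert (phi x = 0). { destruct (Req_dec (phi x) 0); auto. exfalso. apply Hn. exists x. auto. }
    specialize (Hsq x). rewrite H in Hsq. assert (psi x = 0) by nra. lra.
Qed.

Theorem mainTheorem5 (F G F' G' : R -> C) :
  real_analytic F -> real_analytic G ->
  (forall x : R, has_derivative_C F x (F' x)) ->
  (forall x : R, has_derivative_C G x (G' x)) ->
  (forall x : R, Cmod (F x) = Cmod (G x)) ->
  (forall x : R, Cmod (F' x) = Cmod (G' x)) ->
  exists c : C, Cmod c = 1%R /\
    ((forall x : R, G x = (c * F x)%C) \/
     (forall x : R, G x = (c * Cconj (F x))%C)).
Proof.
  intros HF HG DF DG M M'.
  set (f1 := fun x => fst (F x)). set (f2 := fun x => snd (F x)).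
  set (g1 := fun x => fst (G x)). set (g2 := fun x => snd (G x)).
  set (p1 := fun x => fst (F' x)). set (p2 := fun x => snd (F' x)).
  set (q1 := fun x => fst (G' x)). set (q2 := fun x => snd (G' x)).
  assert (Df1 : forall x, is_derive f1 x (p1 x)) by (intros x; apply (der_comp F x (F' x) (DF x))).
  assert (Df2 : forall x, is_derive f2 x (p2 x)) by (intros x; apply (der_comp F x (F' x) (DF x))).
  assert (Dg1 : forall x, is_derive g1 x (q1 x)) by (intros x; apply (der_comp G x (G' x) (DG x))).
  assert (Dg2 : forall x, is_derive g2 x (q2 x)) by (intros x; apply (der_comp G x (G' x) (DG x))).
  destruct (ra_of_C F HF) as [Rf1 Rf2]. destruct (ra_of_C G HG) as [Rg1 Rg2].
  fold f1 f2 in Rf1, Rf2. fold g1 g2 in Rg1, Rg2.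
  assert (Hn : forall x, f1 x ^ 2 + f2 x ^ 2 = g1 x ^ 2 + g2 x ^ 2) by (intros x; apply Cmod_sq; auto).
  assert (Hn' : forall x, p1 x ^ 2 + p2 x ^ 2 = q1 x ^ 2 + q2 x ^ 2) by (intros x; apply Cmod_sq; auto).
  assert (HR : forall x, p1 x * f1 x + p2 x * f2 x = q1 x * g1 x + q2 x * g2 x).
  { intros x. pose proof (der_sq _ _ _ _ x (Df1 x) (Df2 x)) as A1.
    pose proof (der_sq _ _ _ _ x (Dg1 x) (Dg2 x)) as A2.
    assert (A3 : is_derive (fun t => g1 t ^ 2 + g2 t ^ 2) x (2 * (p1 x * f1 x + p2 x * f2 x))).
    { eapply is_derive_ext. 2: exact A1. intros t. apply Hn. }
    apply is_derive_unique in A2. apply is_derive_unique in A3. rewrite A2 in A3. lra. }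
  set (phi := fun x => p2 x * f1 x - p1 x * f2 x). set (psi := fun x => q2 x * g1 x - q1 x * g2 x).
  assert (Hsq : forall x, phi x ^ 2 = psi x ^ 2).
  { intros x. unfold phi, psi.
    transitivity ((p1 x ^ 2 + p2 x ^ 2) * (f1 x ^ 2 + f2 x ^ 2) - (p1 x * f1 x + p2 x * f2 x) ^ 2). ring.
    rewrite Hn, Hn', HR. ring. }
  assert (Cp1 := deriv_cont f1 p1 Rf1 Df1). assert (Cp2 := deriv_cont f2 p2 Rf2 Df2).
  assert (Cq1 := deriv_cont g1 q1 Rg1 Dg1). assert (Cq2 := deriv_cont g2 q2 Rg2 Dg2).
  assert (Cf1 : forall x, continuity_pt f1 x) by (intros x; eapply der_cont; apply Df1).
  assert (Cf2 : forall x, continuity_pt f2 x) by (intros x; eapply der_cont; apply Df2).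
  assert (Cg1 : forall x, continuity_pt g1 x) by (intros x; eapply der_cont; apply Dg1).
  assert (Cg2 : forall x, continuity_pt g2 x) by (intros x; eapply der_cont; apply Dg2).
  assert (Cphi : forall x, continuity_pt phi x).
  { intros x. apply cont_minus; apply cont_mult; auto. }
  assert (Cpsi : forall x, continuity_pt psi x).
  { intros x. apply cont_minus; apply cont_mult; auto. }
  destruct (classic (forall x, f1 x = 0 /\ f2 x = 0)) as [Z|NZ].
  - exists 1%C. split. apply Cmod_1. left. intros x. destruct (Z x) as [Z1 Z2].
    specialize (Hn x). rewrite Z1, Z2 in Hn.
    assert (g1 x = 0) by nra. assert (g2 x = 0) by nra.
    apply C_eq; simpl; unfold f1, f2, g1, g2 in *; lra.
  - apply not_all_ex_not in NZ. destruct NZ as [x0 Hx0].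
    assert (HN0 : f1 x0 ^ 2 + f2 x0 ^ 2 <> 0).
    { intros E. apply Hx0. split; nra. }
    destruct (nonzero_near (fun t => f1 t ^ 2 + f2 t ^ 2) x0 (der_cont _ _ _ (der_sq _ _ _ _ x0 (Df1 x0) (Df2 x0))) HN0) as [d [Hd Hnz]].
    destruct (sign_interval phi psi x0 (d / 2) ltac:(lra) Cphi Cpsi Hsq) as [a [b [s [Ha [Hab [Hb [Hs Hphi]]]]]]].
    assert (Hs2 : s * s = 1) by (destruct Hs as [-> | ->]; ring).
    assert (Hsy : forall y, (s * y) ^ 2 = y ^ 2).
    { intros y. replace ((s * y) ^ 2) with ((s * s) * y ^ 2) by ring. rewrite Hs2. ring. }
    destruct (core f1 (fun x => s * f2 x) g1 g2 p1 (fun x => s * p2 x) q1 q2 a b Hab Df1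
       (fun x => is_derive_scal f2 x s (p2 x) (Df2 x)) Dg1 Dg2) as [c1 [c2 [Hc Hc2]]].
    + intros x Hx. rewrite Hsy. assert (Rabs (x - x0) < d) by (apply Rabs_def1; lra).
      specialize (Hnz x H). assert (0 <= f1 x ^ 2 + f2 x ^ 2) by nra. lra.
    + intros x Hx. rewrite Hsy. apply Hn.
    + intros x Hx. replace (s * p2 x * (s * f2 x)) with ((s * s) * (p2 x * f2 x)) by ring. rewrite Hs2.
      rewrite <- HR. ring.
    + intros x Hx. specialize (Hphi x Hx). unfold phi, psi in Hphi.
      transitivity (s * (p2 x * f1 x - p1 x * f2 x)). ring. rewrite Hphi.
      transitivity ((s * s) * (q2 x * g1 x - q1 x * g2 x)). ring. rewrite Hs2. ring.
    + set (k1 := fun x => g1 x + (- c1) * f1 x + (c2 * s) * f2 x).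
      set (k2 := fun x => g2 x + (- (c1 * s)) * f2 x + (- c2) * f1 x).
      assert (Rk1 : ra k1). { unfold k1. apply ra_plus. apply ra_plus; auto. apply ra_scal; auto. apply ra_scal; auto. }
      assert (Rk2 : ra k2). { unfold k2. apply ra_plus. apply ra_plus; auto. apply ra_scal; auto. apply ra_scal; auto. }
      assert (K1 : forall x, k1 x = 0).
      { apply (identity k1 Rk1 a b Hab). intros x Hx. destruct (Hc2 x Hx) as [E1 E2]. unfold k1. rewrite E1. ring. }
      assert (K2 : forall x, k2 x = 0).
      { apply (identity k2 Rk2 a b Hab). intros x Hx. destruct (Hc2 x Hx) as [E1 E2]. unfold k2. rewrite E2. ring. }
      exists (c1, c2). split.
      { unfold Cmod. simpl. replace (c1 * (c1 * 1) + c2 * (c2 * 1)) with (c1 ^ 2 + c2 ^ 2) by ring. rewrite Hc. apply sqrt_1. }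
      destruct Hs as [-> | ->].
      * left. intros x. specialize (K1 x). specialize (K2 x). unfold k1, k2, f1, f2, g1, g2 in *.
        apply C_eq; simpl; lra.
      * right. intros x. specialize (K1 x). specialize (K2 x). unfold k1, k2, f1, f2, g1, g2 in *.
        apply C_eq; simpl; lra.
Qed.
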